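(* For every $b,b'\in\mathbb R$ and all $p,q\in\Delta_d$, \[ \ell^\Theta_{\mathrm C}(L_bp,L_{b'}q)\le\ell^\Theta_{\mathrm C}(p,q)+\Delta^{-1/2}|b-b'|. \]
   Context: $\Theta=\{\theta_1<\dots<\theta_d\}$ with constant stride $\Delta>0$; $\Delta_d$ the probability simplex of $\mathbb R^d$. For $u\in\Delta_d$, $\eta^{u,0}:=\sum_ku_k\delta_{\theta_k}$. Categorical projection $\Pi^\Theta_{\mathrm C}$: $\delta_x\mapsto\delta_{\theta_1}$ if $x\le\theta_1$, $\delta_{\theta_d}$ if $x\ge\theta_d$, $\frac{\theta_{k+1}-x}{\Delta}\delta_{\theta_k}+\frac{x-\theta_k}{\Delta}\delta_{\theta_{k+1}}$ if $\theta_k\le x\le\theta_{k+1}$, extended linearly to laws. For $b\in\mathbb R$, $L_b:\Delta_d\to\Delta_d$ is defined by $\Pi^\Theta_{\mathrm C}(\text{law of }X+b,\ X\sim\eta^{u,0})=\eta^{L_bu,0}$. Coordinate Cramér metric: $F_u(\theta_k):=\sum_{j\le k}u_j$, $\ell^\Theta_{\mathrm C}(u,v)^2:=\Delta\sum_{k=1}^{d-1}(F_u(\theta_k)-F_v(\theta_k))^2$. *)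

(* Defs.v *)
(* Reals are modelled by an arbitrary real closed field R
   (the statement is purely algebraic; the real numbers are an instance). *)
From HB Require Import structures.
From mathcomp Require Import all_boot all_order all_algebra.
Set Implicit Arguments. Unset Strict Implicit. Unset Printing Implicit Defensive.
Import Order.TTheory GRing.Theory Num.Theory.
Local Open Scope ring_scope.

(* Grid Theta = {theta_1 < ... < theta_d}, 0-indexed here:
   atom k (k = 0 .. d-1) is  theta k = theta1 + k * Delta. *)
Definition theta (R : rcfType) (theta1 Delta : R) (k : nat) : R :=
  theta1 + k%:R * Delta.

Definition simplex (R : rcfType) (d : nat) (u : 'I_d -> R) : Prop :=
  (forall k, 0 <= u k) /\ \sum_(k < d) u k = 1.

Definition cproj_dirac (R : rcfType) (d : nat) (theta1 Delta : R)
    (x : R) (j : nat) : R :=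
  let th := theta theta1 Delta in
  if x <= th 0%N then (j == 0%N)%:R
  else if th d.-1 <= x then (j == d.-1)%:R
  else if (th j <= x) && (x <= th j.+1) then (th j.+1 - x) / Delta
  else if (0 < j)%N && (th j.-1 <= x) && (x <= th j) then (x - th j.-1) / Delta
  else 0.

(* L_b u : coordinates of Pi_C(law of X + b), X ~ sum_k u_k delta_{theta_k},
   i.e. the linear extension of the projection applied to
   sum_k u_k delta_{theta_k + b}. *)
Definition Lb (R : rcfType) (d : nat) (theta1 Delta b : R) (u : 'I_d -> R)
    : 'I_d -> R :=
  fun j => \sum_(k < d) u k * cproj_dirac d theta1 Delta (theta theta1 Delta k + b) j.

Definition cdf (R : rcfType) (d : nat) (u : 'I_d -> R) (k : nat) : R :=
  \sum_(j < d | (j <= k)%N) u j.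

Definition cramer (R : rcfType) (d : nat) (Delta : R) (u v : 'I_d -> R) : R :=
  Num.sqrt (Delta * \sum_(k < d.-1) (cdf u k - cdf v k) ^+ 2).

(* Main.v *)
From HB Require Import structures.
From mathcomp Require Import all_boot all_order all_algebra.
From mathcomp Require Import ring lra zify.
Require Import Defs.
Import Order.TTheory GRing.Theory Num.Theory.
Local Open Scope ring_scope.

Ltac splitifs := repeat match goal with |- context[if ?a <= ?b then _ else _] => case: (lerP a b) => ? end.
Ltac splitifs2 := repeat (match goal with |- context[if (?a <= ?b)%R then _ else _] => case: (lerP a b) => ? end || match goal with |- context [(?a <= ?b)%R] => case: (lerP a b) => ? /= end).
Section Clamp.
Variable R : rcfType.
Definition clp (M t : R) : R := if t <= 0 then 0 else if M <= t then M else t.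
Definition cl := clp 1.

Lemma clp_ge0 (M t : R) : 0 <= M -> 0 <= clp M t.
Proof. rewrite /clp => h; splitifs; lra. Qed.
Lemma clp_le (M t : R) : 0 <= M -> clp M t <= M.
Proof. rewrite /clp => h; splitifs; lra. Qed.
Lemma clp_mono (M s t : R) : 0 <= M -> s <= t -> 0 <= clp M t - clp M s <= t - s.
Proof.
rewrite /clp => h hst; splitifs; apply/andP; split; lra.
Qed.
Lemma clp_lip (M s t : R) : 0 <= M -> `|clp M t - clp M s| <= `|t - s|.
Proof.
move=> h; case: (lerP s t) => hst.
  have /andP[h1 h2] := clp_mono _ _ _ h hst.
  by rewrite !ger0_norm //; lra.
have /andP[h1 h2] := clp_mono _ _ _ h (ltW hst).
rewrite distrC ger0_norm //; lra.
Qed.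
Lemma cl_ge0 (t : R) : 0 <= cl t. Proof. exact: clp_ge0. Qed.
Lemma cl_le1 (t : R) : cl t <= 1. Proof. exact: clp_le. Qed.

Lemma sum_cl (N : nat) (u : R) :
  \sum_(k < N) cl (u + k%:R) = clp N%:R (u + N%:R - 1).
Proof.
elim: N => [|N IH]; first by rewrite big_ord0 /clp; splitifs => //; rewrite ?mulr0n; lra.
rewrite big_ord_recr /= IH -natr1 /cl /clp.
have := ler0n R N; splitifs; lra.
Qed.
End Clamp.

Section Gen.
Variable R : rcfType.

Lemma jensen (m : nat) (w x : 'I_m -> R) :
  (forall i, 0 <= w i) -> \sum_i w i <= 1 ->
  (\sum_i w i * x i) ^+ 2 <= \sum_i w i * x i ^+ 2.
Proof.
move=> w0 w1; set M := \sum_i w i * x i; set S := \sum_i w i.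
have h : 0 <= \sum_i w i * (x i - M) ^+ 2.
  by apply: sumr_ge0 => i _; apply: mulr_ge0 => //; apply: sqr_ge0.
have e c : \sum_i w i * (x i - c) ^+ 2 =
   \sum_i w i * x i ^+ 2 - 2 * c * (\sum_i w i * x i) + c ^+ 2 * (\sum_i w i).
  rewrite !mulr_sumr -sumrN -!big_split /=.
  by apply: eq_bigr => i _; ring.
have h2 : 0 <= M ^+ 2 * (1 - S).
  by apply: mulr_ge0; [apply: sqr_ge0| rewrite subr_ge0].
move: w1; rewrite -/S => w1.
rewrite e -/M -/S in h; lra.
Qed.

Lemma cauchy (m : nat) (x y : 'I_m -> R) :
  (\sum_i x i * y i) ^+ 2 <= (\sum_i x i ^+ 2) * (\sum_i y i ^+ 2).
Proof.
set A := \sum_i x i ^+ 2; set B := \sum_i y i ^+ 2; set C := \sum_i x i * y i.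
have B0 : 0 <= B by apply: sumr_ge0 => i _; apply: sqr_ge0.
have A0 : 0 <= A by apply: sumr_ge0 => i _; apply: sqr_ge0.
have key t : 0 <= A - 2 * t * C + t ^+ 2 * B.
  have -> : A - 2 * t * C + t ^+ 2 * B = \sum_i (x i - t * y i) ^+ 2.
    rewrite /A /B /C !mulr_sumr -sumrN -!big_split /=.
    by apply: eq_bigr => i _; ring.
  by apply: sumr_ge0 => i _; apply: sqr_ge0.
have [Bz|Bnz] := eqVneq B 0.
  have y0 : forall i, y i = 0.
    move=> i; apply/eqP; rewrite -sqrf_eq0; apply/eqP.
    by apply: (psumr_eq0P (P := predT) (F := fun i => y i ^+ 2)) => // j _; apply: sqr_ge0.
  rewrite /C big1 ?expr0n ?Bz ?mulr0 // => i _; by rewrite y0 mulr0.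
have Bp : 0 < B by rewrite lt_def Bnz B0.
have := key (C / B).
have -> : A - 2 * (C / B) * C + (C / B) ^+ 2 * B = A - C ^+ 2 / B.
  by field.
move=> h; have : 0 <= (A - C ^+ 2 / B) * B by apply: mulr_ge0 => //; lra.
have -> : (A - C ^+ 2 / B) * B = A * B - C ^+ 2 by field.
lra.
Qed.

Lemma minkowski (m : nat) (x y : 'I_m -> R) :
  Num.sqrt (\sum_i (x i + y i) ^+ 2) <=
  Num.sqrt (\sum_i x i ^+ 2) + Num.sqrt (\sum_i y i ^+ 2).
Proof.
set A := \sum_i x i ^+ 2; set B := \sum_i y i ^+ 2; set C := \sum_i x i * y i.
have B0 : 0 <= B by apply: sumr_ge0 => i _; apply: sqr_ge0.
have A0 : 0 <= A by apply: sumr_ge0 => i _; apply: sqr_ge0.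
have e : \sum_i (x i + y i) ^+ 2 = A + 2 * C + B.
  rewrite /A /B /C !mulr_sumr -!big_split /=.
  by apply: eq_bigr => i _; ring.
have hC : C <= Num.sqrt A * Num.sqrt B.
  rewrite -sqrtrM //; apply: le_trans (ler_norm C) _.
  by rewrite -sqrtr_sqr ler_sqrt ?cauchy // mulr_ge0.
rewrite e; apply: (@le_trans _ _ (Num.sqrt ((Num.sqrt A + Num.sqrt B) ^+ 2))).
  rewrite ler_sqrt; last by apply: sqr_ge0.
  rewrite sqrrD !sqr_sqrtr //; lra.
rewrite sqrtr_sqr ger0_norm //; by apply: addr_ge0; apply: sqrtr_ge0.
Qed.

Lemma abel (n : nat) (e f : nat -> R) :
  \sum_(i < n.+1) e i * f i =
  \sum_(i < n) (\sum_(j < i.+1) e j) * (f i - f i.+1) +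
  (\sum_(j < n.+1) e j) * f n.
Proof.
elim: n => [|n IH]; first by rewrite big_ord0 !big_ord1 add0r.
rewrite big_ord_recr /= IH [in RHS]big_ord_recr /= [\sum_(j < n.+2) e j]big_ord_recr /=.
ring.
Qed.
End Gen.

Section Proj.
Variable R : rcfType.
Local Notation cl := (@cl R).
Variables (theta1 Delta : R).
Hypothesis hD : 0 < Delta.

Lemma thle m s : (theta theta1 Delta m <= theta1 + s * Delta) = (m%:R <= s).
Proof. by rewrite /theta lerD2l ler_pM2r. Qed.
Lemma thge m s : (theta1 + s * Delta <= theta theta1 Delta m) = (s <= m%:R).
Proof. by rewrite /theta lerD2l ler_pM2r. Qed.
Lemma thdiv1 m s : (theta theta1 Delta m - (theta1 + s * Delta)) / Delta = m%:R - s.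
Proof. rewrite /theta; field; exact: lt0r_neq0. Qed.
Lemma thdiv2 m s : (theta1 + s * Delta - theta theta1 Delta m) / Delta = s - m%:R.
Proof. rewrite /theta; field; exact: lt0r_neq0. Qed.

Lemma cproj_0 n s : (0 < n)%N ->
  cproj_dirac n.+1 theta1 Delta (theta1 + s * Delta) 0 = cl (1 - s).
Proof.
move=> hn; rewrite /cproj_dirac /= !thle !thge !thdiv1.
have -> : (0 == n)%N = false by case: n hn.
have h1 : 1 <= n%:R :> R by rewrite ler1n.
rewrite /cl /clp /=; splitifs2; lra.
Qed.

Lemma cproj_S n j s : (j.+1 < n)%N ->
  cproj_dirac n.+1 theta1 Delta (theta1 + s * Delta) j.+1 =
  cl (j.+2%:R - s) - cl (j.+1%:R - s).
Proof.
move=> hn; rewrite /cproj_dirac /= !thle !thge !thdiv1 !thdiv2.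
have -> : (j.+1 == n)%N = false by apply/negbTE; rewrite neq_ltn hn.
have h1 : (j.+2)%:R <= n%:R :> R by rewrite ler_nat.
have h0 : 0 <= j%:R :> R by rewrite ler0n.
move: h1; rewrite -!natr1 => h1.
rewrite /cl /clp /=; splitifs2; lra.
Qed.
End Proj.


Section More.
Variable R : rcfType.
Local Notation cl := (@cl R).

Lemma sum_le (N k : nat) (g : nat -> R) : (k < N)%N ->
  \sum_(j < N | (j <= k)%N) g j = \sum_(j < k.+1) g j.
Proof.
move=> hk; rewrite -(big_mkord (fun j => (j <= k)%N)).
rewrite (big_cat_nat _ (n:=k.+1)) //=.
have -> : \sum_(k.+1 <= i < N | (i <= k)%N) g i = 0.
  rewrite big_nat_cond big_pred0 // => i /=.
  by apply/negbTE/negP => /andP[/andP[h1 _] h2]; lia.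
rewrite addr0 big_mkord; apply: eq_bigl => j; exact: (ltn_ord j).
Qed.

Lemma cdf_cproj (theta1 Delta : R) (hD : 0 < Delta) n k s : (k < n)%N ->
  \sum_(j < k.+1) cproj_dirac n.+1 theta1 Delta (theta1 + s * Delta) j
  = cl (k.+1%:R - s).
Proof.
elim: k => [|k IH] hk.
  by rewrite big_ord1 cproj_0.
rewrite big_ord_recr /= IH; last by lia.
rewrite cproj_S //; ring.
Qed.

Lemma sum_abs_cl_aux (N : nat) (u u' : R) : u' <= u ->
  \sum_(k < N) `|cl (u + k%:R) - cl (u' + k%:R)| <= u - u'.
Proof.
move=> h.
rewrite (eq_bigr (fun k : 'I_N => cl (u + k%:R) - cl (u' + k%:R))); last first.
  move=> k _; apply: ger0_norm.
  have hh : u' + k%:R <= u + k%:R by rewrite lerD2r.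
  by have /andP[] := clp_mono _ 1 (u' + k%:R) (u + k%:R) ler01 hh.
rewrite sumrB !sum_cl.
have hh : u' + N%:R - 1 <= u + N%:R - 1 by rewrite lerD2r lerD2r.
have /andP[_ ] := clp_mono _ N%:R (u' + N%:R - 1) (u + N%:R - 1) (ler0n _ _) hh.
move=> H; apply: le_trans H _; lra.
Qed.

Lemma sum_abs_cl (N : nat) (u u' : R) :
  \sum_(k < N) `|cl (u + k%:R) - cl (u' + k%:R)| <= `|u - u'|.
Proof.
case: (lerP u' u) => h.
  by apply: sum_abs_cl_aux.
rewrite (eq_bigr (fun k : 'I_N => `|cl (u' + k%:R) - cl (u + k%:R)|)); last first.
  by move=> k _; rewrite distrC.
apply: sum_abs_cl_aux; exact: ltW.
Qed.
End More.


Lemma tele (R : rcfType) (g : nat -> R) (n : nat) :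
  \sum_(i < n) (g i - g i.+1) = g 0%N - g n.
Proof. elim: n => [|n IH]; first by rewrite big_ord0 subrr. by rewrite big_ord_recr /= IH; ring. Qed.

Theorem lemma6 (R : rcfType) (d : nat) (hd : (0 < d)%N) (theta1 Delta : R)
    (hDelta : 0 < Delta) (b b' : R) (p q : 'I_d -> R)
    (hp : simplex p) (hq : simplex q) :
  cramer Delta (Lb theta1 Delta b p) (Lb theta1 Delta b' q)
    <= cramer Delta p q + `|b - b'| / Num.sqrt Delta.
Proof.
case: d hd p q hp hq => [//|n] _ p q [p0 p1] [q0 q1].
have hD0 : Delta != 0 by exact: lt0r_neq0.
have thb : forall (i : nat) (c : R),
    theta theta1 Delta i + c = theta1 + (i%:R + c / Delta) * Delta.
  by move=> i c; rewrite /theta; field.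
set f := fun (k i : nat) (c : R) => cl R (k.+1%:R - (i%:R + c / Delta)).
have F1 : forall (c : R) (u : 'I_n.+1 -> R) (k : nat), (k < n)%N ->
    cdf (Lb theta1 Delta c u) k = \sum_(i < n.+1) u i * f k i c.
  move=> c u k hk; rewrite /cdf /Lb exchange_big /=; apply: eq_bigr => i _.
  rewrite -mulr_sumr thb; congr (_ * _).
  rewrite (@sum_le R _ _ (fun j => cproj_dirac n.+1 theta1 Delta
                    (theta1 + (i%:R + c / Delta) * Delta) j)); last by lia.
  exact: cdf_cproj.
have F2 : forall (u : 'I_n.+1 -> R) (k : nat), (k < n.+1)%N ->
    cdf u k = \sum_(j < k.+1) u (inord j).
  move=> u k hk; rewrite /cdf (eq_bigr (fun j : 'I_n.+1 => u (inord j))); last first.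
    by move=> j _; rewrite inord_val.
  by rewrite (@sum_le R _ _ (fun j => u (inord j))).
set A := fun k : nat => \sum_(i < n.+1) (p i - q i) * f k i b.
set B := fun k : nat => \sum_(i < n.+1) q i * (f k i b - f k i b').
set D := fun k : nat => cdf p k - cdf q k.
have eAB : \sum_(k < n) (cdf (Lb theta1 Delta b p) k - cdf (Lb theta1 Delta b' q) k) ^+ 2
    = \sum_(k < n) (A k + B k) ^+ 2.
  apply: eq_bigr => k _; rewrite !F1 //; congr (_ ^+ 2).
  rewrite /A /B -sumrB -big_split; apply: eq_bigr => i _ /=; ring.
have hA : \sum_(k < n) A k ^+ 2 <= \sum_(k < n) D k ^+ 2.
  set W := fun k i : nat => f k i b - f k i.+1 b.
  have eA : forall k : nat, A k = \sum_(i < n) W k i * D i.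
    move=> k; rewrite /A.
    rewrite (eq_bigr (fun i : 'I_n.+1 => (p (inord i) - q (inord i)) * f k i b)); last first.
      by move=> i _; rewrite inord_val.
    rewrite (@abel R _ (fun i => p (inord i) - q (inord i)) (fun i => f k i b)).
    have -> : \sum_(j < n.+1) (p (inord j) - q (inord j)) = 0.
      have ev : forall u : 'I_n.+1 -> R, \sum_(j < n.+1) u (inord j) = \sum_j u j.
        by move=> u; apply: eq_bigr => j _; rewrite inord_val.
      by rewrite sumrB !ev p1 q1 subrr.
    rewrite mul0r addr0; apply: eq_bigr => i _.
    by rewrite /D !F2 ?(leqW (ltn_ord i)) // sumrB mulrC.
  have W0 : forall k i : nat, 0 <= W k i.
    move=> k i; rewrite /W /f.
    have hh : k.+1%:R - (i.+1%:R + b / Delta) <= k.+1%:R - (i%:R + b / Delta) :> R.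
      rewrite -(@natr1 R i); lra.
    by have /andP[] := clp_mono _ 1 _ _ ler01 hh.
  have Wrow : forall k : nat, \sum_(i < n) W k i <= 1.
    move=> k; rewrite /W (@tele R (fun i => f k i b)).
    have := cl_ge0 R (k.+1%:R - (n%:R + b / Delta)).
    have := cl_le1 R (k.+1%:R - (0%:R + b / Delta)).
    rewrite /f; lra.
  have Wcol : forall i : nat, \sum_(k < n) W k i <= 1.
    move=> i.
    have e : forall k : nat, W k i = - (cl R (k%:R - (i%:R + b / Delta)) -
                                        cl R (k.+1%:R - (i%:R + b / Delta))).
      move=> k; rewrite /W /f opprB.
      have -> : k.+1%:R - (i.+1%:R + b / Delta) = k%:R - (i%:R + b / Delta) :> R.
        by rewrite -(@natr1 R i) -(@natr1 R k); ring.
      by [].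
    under eq_bigr => k _ do rewrite e.
    rewrite sumrN (@tele R (fun k => cl R (k%:R - (i%:R + b / Delta)))).
    have := cl_ge0 R (0%:R - (i%:R + b / Delta)).
    have := cl_le1 R (n%:R - (i%:R + b / Delta)).
    lra.
  apply: (@le_trans _ _ (\sum_(k < n) \sum_(i < n) W k i * D i ^+ 2)).
    apply: ler_sum => k _; rewrite eA.
    exact: (@jensen R _ (fun i : 'I_n => W k i) (fun i : 'I_n => D i)).
  rewrite exchange_big /=; apply: ler_sum => i _.
  rewrite -mulr_suml -[X in _ <= X]mul1r; apply: ler_wpM2r; first exact: sqr_ge0.
  exact: Wcol.
set del := `|b - b'| / Delta.
have del0 : 0 <= del by rewrite /del divr_ge0 // ltW.
have edel : `|b / Delta - b' / Delta| = del.
  by rewrite /del -mulrBl normrM normfV (gtr0_norm hDelta).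
have lip : forall (k i : nat), `|f k i b - f k i b'| <= del.
  move=> k i; rewrite /f -edel.
  apply: le_trans (clp_lip _ _ _ _ ler01) _.
  by rewrite le_eqVlt; apply/orP; left; apply/eqP; rewrite distrC; congr (`|_|); ring.
have hBk : forall k, `|B k| <= del.
  move=> k; rewrite /B; apply: le_trans (ler_norm_sum _ _ _) _.
  apply: (@le_trans _ _ (\sum_(i < n.+1) q i * del)).
    apply: ler_sum => i _; rewrite normrM (ger0_norm (q0 i)).
    by apply: ler_wpM2l.
  by rewrite -mulr_suml q1 mul1r.
have inner : forall i : nat, \sum_(k < n) `|f k i b - f k i b'| <= del.
  move=> i; rewrite -edel.
  have e : forall (k : nat) (x : R), k.+1%:R - x = (1 - x) + k%:R.
    by move=> k x; rewrite -natr1; ring.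
  rewrite /f (eq_bigr (fun k : 'I_n => `|cl R ((1 - (i%:R + b / Delta)) + k%:R)
         - cl R ((1 - (i%:R + b' / Delta)) + k%:R)|)); last by move=> k _; rewrite !e.
  apply: le_trans (sum_abs_cl _ _ _ _) _.
  by rewrite le_eqVlt; apply/orP; left; apply/eqP; rewrite distrC; congr (`|_|); ring.
have hBs : \sum_(k < n) `|B k| <= del.
  apply: (@le_trans _ _ (\sum_(k < n) \sum_(i < n.+1) q i * `|f k i b - f k i b'|)).
    apply: ler_sum => k _; rewrite /B; apply: le_trans (ler_norm_sum _ _ _) _.
    by apply: ler_sum => i _; rewrite normrM (ger0_norm (q0 i)).
  rewrite exchange_big /=.
  apply: (@le_trans _ _ (\sum_(i < n.+1) q i * del)).
    by apply: ler_sum => i _; rewrite -mulr_sumr; apply: ler_wpM2l.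
  by rewrite -mulr_suml q1 mul1r.
have hB : \sum_(k < n) B k ^+ 2 <= del ^+ 2.
apply: (@le_trans _ _ (\sum_(k < n) del * `|B k|)).
  apply: ler_sum => k _; rewrite -(ger0_norm (sqr_ge0 (B k))) normrX expr2.
  by apply: ler_wpM2r => //; apply: normr_ge0.
by rewrite -mulr_sumr expr2; apply: ler_wpM2l.
rewrite /cramer /= eAB !sqrtrM ?(ltW hDelta) //.
apply: le_trans; first (apply: (ler_wpM2l (sqrtr_ge0 Delta)); exact: minkowski).
rewrite mulrDr; apply: lerD.
  apply: ler_wpM2l; first exact: sqrtr_ge0.
  by rewrite ler_sqrt ?hA //; apply: sumr_ge0 => i _; apply: sqr_ge0.
have hsB : Num.sqrt (\sum_(k < n) B k ^+ 2) <= del.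
  by rewrite -(ger0_norm del0) -sqrtr_sqr ler_sqrt ?hB //; apply: sqr_ge0.
apply: le_trans (ler_wpM2l (sqrtr_ge0 Delta) hsB) _.
have sD : 0 < Num.sqrt Delta by rewrite sqrtr_gt0.
rewrite /del -{2}(sqr_sqrtr (ltW hDelta)) le_eqVlt; apply/orP; left; apply/eqP.
field; exact: lt0r_neq0.
Qed.
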